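(* Let $s_1,s_2,s_3\in\Sigma^n$ be such that $s_1,s_2$ are matching and $s_2,s_3$ are matching, and let $h = h_{s_1,s_2}\oplus h_{s_2,s_3}$ (position-wise XOR). (i) If $h$ contains no two consecutive $1$s, then $s_1$ and $s_3$ are matching and $h = h_{s_1,s_3}$. (ii) If $h[p-1]=h[p]=1$ for some $p$, then $s_1$ and $s_3$ are not matching, and every string $t\in\Sigma^n$ that matches both $s_1$ and $s_3$ satisfies $t[p-1..p+1] = s_2[p-1..p+1]$.
   Context: The swap at position $p$ transforms $s$ into $s[1]\cdots s[p-1]\,s[p+1]\,s[p]\,s[p+2]\cdots s[|s|]$. A swap permutation is a set of swaps at positions pairwise differing by at least $2$ (applied simultaneously). Two strings of length $n$ are matching if some swap permutation transforms one into the other. A swap permutation is valid if it never swaps two identical letters; for matching strings $u,v$ there is a unique valid swap permutation from $u$ to $v$, and $h_{u,v}$ denotes its swap string: the binary string of length $n-1$ with $h_{u,v}[p]=1$ iff this valid permutation swaps positions $(p,p+1)$. *)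

(* Defs.v *)
(* Strings are sequences over an eqType alphabet; all
   positions are 0-based. *)
From mathcomp Require Import all_boot.
Set Implicit Arguments. Unset Strict Implicit. Unset Printing Implicit Defensive.

Section Swaps.
Variable Sigma : eqType.

(* A set of swap positions is encoded as a bitseq P: position p is swapped
   (i.e. letters p and p+1 exchanged) iff nth false P p. *)

Definition swapsep (P : bitseq) : bool :=
  ~~ has (fun i => nth false P i && nth false P i.+1) (iota 0 (size P)).

Definition swap_idx (P : bitseq) (i : nat) : nat :=
  if nth false P i then i.+1
  else if (0 < i) && nth false P i.-1 then i.-1 else i.

Definition apply_swaps (P : bitseq) (s : seq Sigma) : seq Sigma :=
  if s is x0 :: _ then [seq nth x0 s (swap_idx P i) | i <- iota 0 (size s)]
  else [::].

Definition swap_perm_for (s : seq Sigma) (P : bitseq) : bool :=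
  (size P == (size s).-1) && swapsep P.

Definition matching (u v : seq Sigma) : Prop :=
  exists P : bitseq, swap_perm_for u P /\ apply_swaps P u = v.

Definition valid_swaps (u : seq Sigma) (P : bitseq) : bool :=
  all (fun i => nth false P i ==> (onth u i != onth u i.+1)) (iota 0 (size P)).

(* h_{u,v}: the swap string of the (unique) valid swap permutation from u to v
   (an arbitrary all-zero default if there is none, i.e. u, v not matching). *)
Definition hstr (u v : seq Sigma) : bitseq :=
  match [pick P : ((size u).-1).-tuple bool |
           swapsep P && valid_swaps u P && (apply_swaps P u == v)] with
  | Some P => val P
  | None => nseq (size u).-1 false
  end.

End Swaps.

Definition xorb_seq (a b : bitseq) : bitseq := [seq p.1 (+) p.2 | p <- zip a b].

(* Main.v *)
Require Import Defs.
From mathcomp Require Import all_boot.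
From mathcomp Require Import zify.
Set Implicit Arguments. Unset Strict Implicit. Unset Printing Implicit Defensive.

Section S.
Variable Sigma : eqType.
Implicit Types (u v : seq Sigma) (P Q : bitseq).

Lemma nthP_lt P i : nth false P i -> i < size P.
Proof. by move=> H; rewrite ltnNge; apply/negP=> /(nth_default false); rewrite H. Qed.

Lemma sep_nth P i : swapsep P -> nth false P i && nth false P i.+1 = false.
Proof.
move=> /hasPn H; case: (ltnP i (size P)) => Hi.
  by apply/negbTE/H; rewrite mem_iota.
by rewrite nth_default.
Qed.

Lemma onth_lt x0 u i : i < size u -> onth u i = Some (nth x0 u i).
Proof. by move=> Hi; rewrite onthE (nth_map x0). Qed.

Lemma swap_idx_lt u P i : swap_perm_for u P -> i < size u -> swap_idx P i < size u.
Proof.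
case/andP=> /eqP sP _ Hi; rewrite /swap_idx.
case: ifP => [/nthP_lt|_]; first by rewrite sP; lia.
case: ifP => _ //; lia.
Qed.

Lemma size_apply u P : size (apply_swaps P u) = size u.
Proof. by case: u => //= a u; rewrite size_map size_iota. Qed.

Lemma apply_nth u P x0 i : swap_perm_for u P -> i < size u ->
  nth x0 (apply_swaps P u) i = nth x0 u (swap_idx P i).
Proof.
move=> HP Hi; have Hs := swap_idx_lt HP Hi.
case: u HP Hi Hs => [|a u] // HP Hi Hs; rewrite /apply_swaps.
rewrite (nth_map 0); last by rewrite size_iota.
by rewrite nth_iota // add0n; apply: set_nth_default.
Qed.

Lemma apply_eq u v P : swap_perm_for u P -> size v = size u ->
  (forall x0 i, i < size u -> nth x0 v i = nth x0 u (swap_idx P i)) ->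
  apply_swaps P u = v.
Proof.
move=> HP Hs H; case: u HP Hs H => [|a u] HP Hs H; first by move: Hs; clear H; case: v.
apply: (eq_from_nth (x0:=a)); first by rewrite size_apply Hs.
by move=> i; rewrite size_apply => Hi; rewrite apply_nth // H.
Qed.

Lemma perm_apply u P Q : swap_perm_for (apply_swaps Q u) P = swap_perm_for u P.
Proof. by rewrite /swap_perm_for size_apply. Qed.

Lemma valid_nth u P x0 i : swap_perm_for u P -> valid_swaps u P ->
  nth false P i -> nth x0 u i <> nth x0 u i.+1.
Proof.
case/andP=> /eqP sP _ /allP V Hi.
have Hl := nthP_lt Hi.
have := V i; rewrite mem_iota add0n Hl Hi => /(_ isT).
rewrite (onth_lt x0) ?(onth_lt x0 (i:=i.+1)); try lia.
by move=> /eqP H E; apply: H; rewrite E.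
Qed.

Lemma valid_of u P : swap_perm_for u P ->
  (forall x0 i, nth false P i -> nth x0 u i <> nth x0 u i.+1) -> valid_swaps u P.
Proof.
case/andP=> /eqP sP _ H; apply/allP=> i; rewrite mem_iota add0n => /andP[_ Hi].
apply/implyP=> Pi.
case: u sP H Hi => [|a u] sP H Hi; first by rewrite sP in Hi.
have h1 : i < size (a::u) by rewrite /= in sP *; lia.
have h2 : i.+1 < size (a::u) by rewrite /= in sP *; lia.
rewrite (onth_lt a h1) (onth_lt a h2).
by apply/eqP=> -[E]; exact: (H a i Pi E).
Qed.

Lemma swap_idx_inv P i : swapsep P -> swap_idx P (swap_idx P i) = i.
Proof.
move=> sP; have := sep_nth i sP; have := sep_nth i.-1 sP.
rewrite /swap_idx; case Hi: (nth false P i) => /=.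
  by move=> _ ->; rewrite Hi.
move=> _ _; case: i Hi => [|i] Hi /=; first by rewrite Hi.
by case Hj: (nth false P i) => /=; rewrite ?Hj ?Hi.
Qed.


Lemma swap_idx_T P i : nth false P i -> swap_idx P i = i.+1.
Proof. by rewrite /swap_idx => ->. Qed.

Lemma swap_idx_S P i : swapsep P -> nth false P i -> swap_idx P i.+1 = i.
Proof.
move=> sP Pi; have := sep_nth i sP; rewrite Pi /= => H.
by rewrite /swap_idx H /= Pi.
Qed.

Lemma perm_lt u P i : swap_perm_for u P -> nth false P i -> i.+1 < size u.
Proof. case/andP=> /eqP sP _ /nthP_lt; rewrite sP; lia. Qed.

Lemma apply_inv u P : swap_perm_for u P -> apply_swaps P (apply_swaps P u) = u.
Proof.
move=> HP; apply: apply_eq; rewrite ?perm_apply ?size_apply //.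
move=> x0 i Hi; rewrite apply_nth //; last exact: swap_idx_lt.
by rewrite swap_idx_inv //; case/andP: HP.
Qed.

Lemma valid_apply u P : swap_perm_for u P -> valid_swaps u P ->
  valid_swaps (apply_swaps P u) P.
Proof.
move=> HP VP; apply: valid_of; rewrite ?perm_apply // => x0 i Pi.
have Hl := perm_lt HP Pi.
rewrite !apply_nth //; try lia.
rewrite swap_idx_T // swap_idx_S //; last by case/andP: HP.
by move=> E; have := valid_nth (x0:=x0) HP VP Pi; rewrite E.
Qed.

Definition canon u P : bitseq :=
  [seq nth false P i && (onth u i != onth u i.+1) | i <- iota 0 (size P)].

Lemma nth_canon u P i :
  nth false (canon u P) i = nth false P i && (onth u i != onth u i.+1).
Proof.
case: (ltnP i (size P)) => Hi.
  by rewrite (nth_map 0) ?size_iota // nth_iota.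
by rewrite !nth_default // size_map size_iota.
Qed.

Lemma canon_perm u P : swap_perm_for u P -> swap_perm_for u (canon u P).
Proof.
case/andP=> sP spP; rewrite /swap_perm_for size_map size_iota sP /=.
apply/hasPn=> i _; rewrite !nth_canon; have := sep_nth i spP.
by case: (nth false P i); case: (nth false P i.+1) => //= _; rewrite ?andbF.
Qed.

Lemma canon_valid u P : valid_swaps u (canon u P).
Proof. by apply/allP=> i _; rewrite nth_canon; apply/implyP=> /andP[]. Qed.

Lemma canon_idx u P x0 i : swapsep P ->
  nth x0 u (swap_idx P i) = nth x0 u (swap_idx (canon u P) i).
Proof.
move=> sP; rewrite /swap_idx !nth_canon -!(odflt_onth x0).
have := sep_nth i.-1 sP.
case: i => [|i] /=.
  by case: (nth false P 0) => //=; case: eqP => //= ->.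
case Pi: (nth false P i.+1) => /=.
  by rewrite andbT => ->; case: eqP => //= ->.
by case: (nth false P i) => //=; case: eqP => //= ->.
Qed.

Lemma canon_apply u P : swap_perm_for u P ->
  apply_swaps (canon u P) u = apply_swaps P u.
Proof.
move=> HP; apply: apply_eq; rewrite ?size_apply ?canon_perm //.
move=> x0 i Hi; rewrite apply_nth // canon_idx //; by case/andP: HP.
Qed.

Lemma uniq_step u P Q i : swap_perm_for u P -> swap_perm_for u Q ->
  valid_swaps u P -> apply_swaps P u = apply_swaps Q u ->
  (0 < i -> nth false P i.-1 = nth false Q i.-1) ->
  nth false P i -> ~~ nth false Q i -> False.
Proof.
move=> HP HQ VP E IH Pi Qi.
have Hl := perm_lt HP Pi.
have x0 : Sigma by move: Hl; case: u {HP HQ VP E} => // a.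
have := congr1 (nth x0 ^~ i) E; rewrite !apply_nth //; try lia.
rewrite swap_idx_T // /swap_idx (negbTE Qi).
have := sep_nth i.-1 (proj2 (andP HP)).
case: i IH Pi Qi Hl => [|i] IH Pi Qi Hl /=.
  by move=> _ /esym; apply: (valid_nth (x0:=x0) HP VP Pi).
rewrite -IH // Pi andbT => ->.
by move=> /esym; apply: (valid_nth (x0:=x0) HP VP Pi).
Qed.

Lemma uniq_valid u P Q : swap_perm_for u P -> swap_perm_for u Q ->
  valid_swaps u P -> valid_swaps u Q -> apply_swaps P u = apply_swaps Q u ->
  P = Q.
Proof.
move=> HP HQ VP VQ E.
have H : forall i, nth false P i = nth false Q i.
  elim/ltn_ind=> i IH.
  have IH' : 0 < i -> nth false P i.-1 = nth false Q i.-1.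
    by move=> Hi; apply: IH; lia.
  case Pi: (nth false P i); case Qi: (nth false Q i) => //.
    by exfalso; apply: (@uniq_step u P Q i HP HQ VP E IH'); rewrite ?Pi ?Qi.
  exfalso; apply: (@uniq_step u Q P i HQ HP VQ (esym E)); rewrite ?Pi ?Qi //.
  by move=> Hi; rewrite IH'.
apply: (eq_from_nth (x0:=false)) => [|i _]; last exact: H.
by case/andP: HP => /eqP ->; case/andP: HQ => /eqP ->.
Qed.

Lemma hstr_spec u v : matching u v ->
  [/\ swap_perm_for u (hstr u v), valid_swaps u (hstr u v)
    & apply_swaps (hstr u v) u = v].
Proof.
case=> P [HP HA]; rewrite /hstr; case: pickP => [T /andP[/andP[sT vT] /eqP aT] | H].
  by split=> //; rewrite /swap_perm_for size_tuple eqxx sT.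
exfalso.
have sQ : size (canon u P) == (size u).-1 by case/andP: (canon_perm HP).
have := H (Tuple sQ); rewrite /=.
case/andP: (canon_perm HP) => _ ->; rewrite canon_valid canon_apply // HA eqxx.
by [].
Qed.

Lemma hstr_eq u v Q : swap_perm_for u Q -> valid_swaps u Q ->
  apply_swaps Q u = v -> hstr u v = Q.
Proof.
move=> HQ VQ AQ; have M : matching u v by exists Q.
case: (hstr_spec M) => H1 H2 H3; apply: (uniq_valid H1 HQ H2 VQ).
by rewrite H3 AQ.
Qed.


Lemma cnt_step u P x0 k c : swap_perm_for u P -> k.+1 < size u ->
  count_mem c (take k.+1 (apply_swaps P u)) + nth false P k * (nth x0 u k == c) =
  count_mem c (take k.+1 u) + nth false P k * (nth x0 u k.+1 == c).
Proof.
move=> HP; have sP : swapsep P by case/andP: HP.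
have sA := size_apply u P.
elim: k => [|k IH] Hk.
  rewrite !(take_nth x0) ?sA; try lia.
  rewrite !take0 /= (apply_nth _ HP); last lia.
  rewrite /swap_idx /=.
  by case: (nth false P 0) => /=; lia.
rewrite (take_nth x0 (n:=k.+1)) ?sA; last lia.
rewrite (take_nth x0 (n:=k.+1) (s:=u)); last lia.
rewrite -!cats1 !count_cat /= (apply_nth _ HP); last lia.
have := IH ltac:(lia); have := sep_nth k sP.
rewrite /swap_idx /=.
by case: (nth false P k); case: (nth false P k.+1) => //= _; lia.
Qed.


Lemma coreA (x y z t : seq Sigma) (P1 P2 R S : bitseq) p x0 :
  swap_perm_for x P1 -> valid_swaps x P1 -> apply_swaps P1 x = y ->
  swap_perm_for y P2 -> valid_swaps y P2 -> apply_swaps P2 y = z ->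
  swap_perm_for x R -> apply_swaps R x = t ->
  swap_perm_for z S -> apply_swaps S z = t ->
  nth false P1 p = true -> nth false P2 p.+1 = true -> p.+2 < size x ->
  [/\ nth x0 t p = nth x0 y p, nth x0 t p.+1 = nth x0 y p.+1
    & nth x0 t p.+2 = nth x0 y p.+2].
Proof.
move=> HP1 VP1 A1 HP2 VP2 A2 HR AR HS AS H1 H2 Hp.
have sy : size y = size x by rewrite -A1 size_apply.
have sz : size z = size x by rewrite -A2 size_apply.
have sP1 : swapsep P1 by case/andP: HP1.
have sP2 : swapsep P2 by case/andP: HP2.
have sR : swapsep R by case/andP: HR.
have sS : swapsep S by case/andP: HS.
have hp0 : p < size x by apply: ltn_trans Hp; apply: ltn_trans (ltnSn _).
have hp1 : p.+1 < size x by apply: ltn_trans Hp.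
have Y0 : nth x0 y p = nth x0 x p.+1.
  by rewrite -A1 (apply_nth _ HP1 hp0) swap_idx_T.
have Y1 : nth x0 y p.+1 = nth x0 x p.
  by rewrite -A1 (apply_nth _ HP1 hp1) swap_idx_S.
have Z1 : nth x0 z p.+1 = nth x0 y p.+2.
  by rewrite -A2 (apply_nth _ HP2 (ltac:(by rewrite sy) : p.+1 < size y)) swap_idx_T.
have Vx : nth x0 x p <> nth x0 x p.+1 := valid_nth (x0:=x0) HP1 VP1 H1.
have Vy : nth x0 y p.+1 <> nth x0 y p.+2 := valid_nth (x0:=x0) HP2 VP2 H2.
have P2p : nth false P2 p = false by have := sep_nth p sP2; rewrite H2 andbT.
have P1p : nth false P1 p.+1 = false by have := sep_nth p sP1; rewrite H1.
have hp1y : p.+1 < size y by rewrite sy.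
have hp1z : p.+1 < size z by rewrite sz.
have hpy : p.+2 < size y by rewrite sy.
have hpz : p.+2 < size z by rewrite sz.
have Rp : nth false R p = true.
  set b := nth x0 x p.
  have C1 := @cnt_step x P1 x0 p b HP1 hp1.
  have C2 := @cnt_step y P2 x0 p b HP2 hp1y.
  have C3 := @cnt_step x R x0 p b HR hp1.
  have C4 := @cnt_step z S x0 p b HS hp1z.
  rewrite A1 H1 eqxx in C1; rewrite A2 P2p in C2; rewrite AR in C3; rewrite AS in C4.
  have e1 : (nth x0 x p.+1 == b) = false by apply/eqP=> E; apply: Vx.
  have e2 : (nth x0 z p.+1 == b) = false by apply/eqP=> E; apply: Vy; rewrite -Z1 E Y1.
  rewrite e1 in C1; rewrite e2 in C4.
  move: C1 C2 C4 C3; clear; case: (nth false R p) => //=; rewrite !mul0n ?muln0 ?muln1 ?addn0; lia.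
have Sp : nth false S p.+1 = true.
  set b := nth x0 y p.+1.
  have C1 := @cnt_step x P1 x0 p.+1 b HP1 Hp.
  have C2 := @cnt_step y P2 x0 p.+1 b HP2 hpy.
  have C3 := @cnt_step x R x0 p.+1 b HR Hp.
  have C4 := @cnt_step z S x0 p.+1 b HS hpz.
  rewrite A1 P1p in C1; rewrite A2 H2 eqxx in C2; rewrite AR in C3; rewrite AS in C4.
  have e1 : (nth x0 y p.+2 == b) = false by apply/eqP=> E; apply: Vy.
  have e2 : (nth x0 x p.+1 == b) = false by apply/eqP=> E; apply: Vx; rewrite E /b Y1.
  rewrite e1 in C2; rewrite e2 in C3.
  move: C1 C2 C3 C4; clear; case: (nth false S p.+1) => //=; rewrite !mul0n ?muln0 ?muln1 ?addn0; lia.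
split.
- by rewrite -AR (apply_nth _ HR hp0) swap_idx_T ?Y0.
- by rewrite -AR (apply_nth _ HR hp1) swap_idx_S ?Y1.
- by rewrite -AS (apply_nth _ HS hpz) swap_idx_S ?Z1.
Qed.


Ltac is_idx j := lazymatch j with | O => idtac | S ?j' => is_idx j'
   | ?k => is_var k end.
Ltac bitcase := repeat (match goal with |- context [nth false ?P ?j] =>
   is_idx j; case: (nth false P j) => /= end).
Ltac bitcaseP Q := repeat (match goal with |- context [nth false Q ?j] =>
   is_idx j; case: (nth false Q j) => /= end).
Ltac fin := solve [intros; first [discriminate | reflexivity | lia]].

Lemma idx_comp P1 P2 h i : swapsep P1 -> swapsep P2 -> swapsep h ->
  (forall j, nth false h j = nth false P1 j (+) nth false P2 j) ->
  swap_idx P1 (swap_idx P2 i) = swap_idx h i.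
Proof.
move=> s1 s2 sh hE.
have a1 := fun j => @sep_nth P1 j s1; have a2 := fun j => @sep_nth P2 j s2; have ah := fun j => @sep_nth h j sh.
case: i => [|[|k]].
- move: (a1 0) (a2 0) (ah 0); rewrite /swap_idx !hE /=; bitcaseP P2; bitcase; fin.
- move: (a1 0) (a1 1) (a2 0) (a2 1) (ah 0) (ah 1); rewrite /swap_idx !hE /=.
  bitcaseP P2; bitcase; fin.
- move: (a1 k) (a1 k.+1) (a1 k.+2) (a2 k) (a2 k.+1) (a2 k.+2) (ah k) (ah k.+1) (ah k.+2).
  rewrite /swap_idx !hE /=; bitcaseP P2; bitcase; fin.
Qed.

Lemma idx_fix P1 P2 h i : swapsep P1 -> swapsep P2 -> swapsep h ->
  (forall j, nth false h j = nth false P1 j (+) nth false P2 j) ->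
  nth false P2 i -> ~~ nth false P1 i ->
  swap_idx P1 i = i /\ swap_idx P1 i.+1 = i.+1.
Proof.
move=> s1 s2 sh hE.
have a1 := fun j => @sep_nth P1 j s1; have a2 := fun j => @sep_nth P2 j s2; have ah := fun j => @sep_nth h j sh.
case: i => [|k].
- move: (a1 0) (a2 0) (ah 0); rewrite /swap_idx !hE /=; bitcaseP P2; bitcase; fin.
- move: (a1 k) (a1 k.+1) (a2 k) (a2 k.+1) (ah k) (ah k.+1); rewrite /swap_idx !hE /=.
  bitcaseP P2; bitcase; fin.
Qed.


Lemma nth_xor (a c : bitseq) j : size a = size c ->
  nth false (xorb_seq a c) j = nth false a j (+) nth false c j.
Proof.
move=> Hac; rewrite /xorb_seq; case: (ltnP j (size a)) => Hj.
  by rewrite (nth_map (false, false)) ?size_zip -?Hac ?minnn // nth_zip.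
rewrite !nth_default ?size_map ?size_zip -?Hac ?minnn //.
Qed.

Lemma take3 (s : seq Sigma) x0 p : p.+2 < size s ->
  take 3 (drop p s) = [:: nth x0 s p; nth x0 s p.+1; nth x0 s p.+2].
Proof.
move=> Hp.
rewrite (drop_nth x0) ?(drop_nth x0 (n:=p.+1)) ?(drop_nth x0 (n:=p.+2)) //;
  try lia.
by rewrite /= take0.
Qed.

Lemma id_perm u : swap_perm_for u (nseq (size u).-1 false) /\
  apply_swaps (nseq (size u).-1 false) u = u.
Proof.
have H : swap_perm_for u (nseq (size u).-1 false).
  rewrite /swap_perm_for size_nseq eqxx /=.
  by apply/hasPn=> i _; rewrite !nth_nseq; case: ifP; case: ifP.
split=> //; apply: apply_eq => // x0 i Hi.
by rewrite /swap_idx !nth_nseq !if_same andbF.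
Qed.

Lemma part1 (s1 s2 s3 : seq Sigma) P1 P2 h :
  swap_perm_for s1 P1 -> valid_swaps s1 P1 -> apply_swaps P1 s1 = s2 ->
  swap_perm_for s2 P2 -> valid_swaps s2 P2 -> apply_swaps P2 s2 = s3 ->
  (forall j, nth false h j = nth false P1 j (+) nth false P2 j) ->
  swapsep h -> size h = (size s1).-1 ->
  matching s1 s3 /\ h = hstr s1 s3.
Proof.
move=> HP1 VP1 A1 HP2 VP2 A2 hE sh Hsh.
have sP1 : swapsep P1 by case/andP: HP1.
have sP2 : swapsep P2 by case/andP: HP2.
have s12 : size s2 = size s1 by rewrite -A1 size_apply.
have s23 : size s3 = size s1 by rewrite -A2 size_apply s12.
have Hperm : swap_perm_for s1 h by rewrite /swap_perm_for Hsh eqxx sh.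
have Happ : apply_swaps h s1 = s3.
  apply: apply_eq => // x0 i Hi.
  have Hi' : i < size s2 by rewrite s12.
  rewrite -A2 (apply_nth _ HP2 Hi').
  have Hj := swap_idx_lt HP2 Hi'; rewrite s12 in Hj.
  by rewrite -A1 (apply_nth _ HP1 Hj) (idx_comp i sP1 sP2 sh hE).
have Hval : valid_swaps s1 h.
  apply: valid_of => // x0 i; rewrite hE.
  case P1i: (nth false P1 i) => /=.
    by move=> _; exact: (valid_nth HP1 VP1 P1i).
  move=> P2i.
  have [E1 E2] := idx_fix sP1 sP2 sh hE P2i (negbT P1i).
  have Hl := perm_lt HP2 P2i.
  have := valid_nth (x0:=x0) HP2 VP2 P2i.
  rewrite -A1 (apply_nth _ HP1) ?E1 ?(apply_nth _ HP1) ?E2 -?s12 //; lia.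
split; first by exists h.
by rewrite (hstr_eq Hperm Hval Happ).
Qed.

Lemma coreAB (s1 s2 s3 t : seq Sigma) P1 P2 R S p :
  swap_perm_for s1 P1 -> valid_swaps s1 P1 -> apply_swaps P1 s1 = s2 ->
  swap_perm_for s2 P2 -> valid_swaps s2 P2 -> apply_swaps P2 s2 = s3 ->
  swap_perm_for t R -> apply_swaps R t = s1 ->
  swap_perm_for t S -> apply_swaps S t = s3 ->
  (nth false P1 p && nth false P2 p.+1) || (nth false P2 p && nth false P1 p.+1) ->
  p.+2 < size s1 ->
  take 3 (drop p t) = take 3 (drop p s2).
Proof.
move=> HP1 VP1 A1 HP2 VP2 A2 HR AR HS AS Hb Hp.
have [x0 _] : exists x0 : Sigma, True by move: Hp; case: (s1) => // a; exists a.
have s12 : size s2 = size s1 by rewrite -A1 size_apply.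
have s23 : size s3 = size s1 by rewrite -A2 size_apply s12.
have st : size t = size s1 by rewrite -AR size_apply.
have HR' : swap_perm_for s1 R by rewrite -AR perm_apply.
have AR' : apply_swaps R s1 = t by rewrite -AR apply_inv.
have HS' : swap_perm_for s3 S by rewrite -AS perm_apply.
have AS' : apply_swaps S s3 = t by rewrite -AS apply_inv.
rewrite (take3 x0) ?st // (take3 x0) ?s12 //.
case/orP: Hb => /andP[B1 B2].
  have [-> -> ->] := coreA x0 HP1 VP1 A1 HP2 VP2 A2 HR' AR' HS' AS' B1 B2 Hp.
  by [].
have HP2' : swap_perm_for s3 P2 by rewrite -A2 perm_apply.
have VP2' : valid_swaps s3 P2 by rewrite -A2; apply: valid_apply.
have A2' : apply_swaps P2 s3 = s2 by rewrite -A2 apply_inv.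
have HP1' : swap_perm_for s2 P1 by rewrite -A1 perm_apply.
have VP1' : valid_swaps s2 P1 by rewrite -A1; apply: valid_apply.
have A1' : apply_swaps P1 s2 = s1 by rewrite -A1 apply_inv.
have [-> -> ->] := coreA x0 HP2' VP2' A2' HP1' VP1' A1' HS' AS' HR' AR' B1 B2
  ltac:(by rewrite s23).
by [].
Qed.

End S.

Theorem mainTheorem2 (Sigma : eqType) (n : nat) (s1 s2 s3 : seq Sigma) :
  size s1 = n -> size s2 = n -> size s3 = n ->
  matching s1 s2 -> matching s2 s3 ->
  let h := xorb_seq (hstr s1 s2) (hstr s2 s3) in
  (swapsep h -> matching s1 s3 /\ h = hstr s1 s3) /\
  (forall p : nat, nth false h p -> nth false h p.+1 ->
     ~ matching s1 s3 /\
     (forall t : seq Sigma, size t = n -> matching t s1 -> matching t s3 ->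
        take 3 (drop p t) = take 3 (drop p s2))).
Proof.
move=> H1 H2 H3 M12 M23 h.
have [HP1 VP1 A1] := hstr_spec M12.
have [HP2 VP2 A2] := hstr_spec M23.
have sz1 : size (hstr s1 s2) = n.-1 by case/andP: (HP1) => /eqP ->; rewrite H1.
have sz2 : size (hstr s2 s3) = n.-1 by case/andP: (HP2) => /eqP ->; rewrite H2.
have hE : forall j, nth false h j =
    nth false (hstr s1 s2) j (+) nth false (hstr s2 s3) j.
  by move=> j; rewrite /h nth_xor // sz1 sz2.
have sP1 : swapsep (hstr s1 s2) by case/andP: (HP1).
have sP2 : swapsep (hstr s2 s3) by case/andP: (HP2).
split.
  move=> sh; apply: (part1 HP1 VP1 A1 HP2 VP2 A2 hE sh).
  by rewrite /h /xorb_seq size_map size_zip sz1 sz2 minnn H1.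
move=> p hp hp1.
have Hb : (nth false (hstr s1 s2) p && nth false (hstr s2 s3) p.+1) ||
          (nth false (hstr s2 s3) p && nth false (hstr s1 s2) p.+1).
  move: hp hp1 (sep_nth p sP1) (sep_nth p sP2); rewrite !hE.
  case: (nth false (hstr s1 s2) p); case: (nth false (hstr s2 s3) p);
  case: (nth false (hstr s1 s2) p.+1); case: (nth false (hstr s2 s3) p.+1) => //=.
have Hp : p.+2 < size s1.
  case/orP: Hb => /andP[_ B].
    by have := perm_lt HP2 B; rewrite H2 H1.
  exact: (perm_lt HP1 B).
have T : forall t : seq Sigma, size t = n -> matching t s1 -> matching t s3 ->
    take 3 (drop p t) = take 3 (drop p s2).
  move=> t _ [R [HR AR]] [S [HS AS]].
  exact: (coreAB HP1 VP1 A1 HP2 VP2 A2 HR AR HS AS Hb Hp).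
split=> // M13.
have [x0 _] : exists x0 : Sigma, True by move: Hp; case: (s1) => // a; exists a.
have [Hid Aid] := id_perm s1.
have := T s1 H1 (ex_intro _ _ (conj Hid Aid)) M13.
rewrite (take3 x0 Hp) (take3 x0 (p:=p)) ?H2 -?H1 // => -[E0 E1 E2].
have hp0 : p < size s1 by apply: ltn_trans Hp; apply: ltn_trans (ltnSn _).
have hq1 : p.+1 < size s1 by apply: ltn_trans Hp.
case/orP: Hb => /andP[B1 B2].
  apply: (valid_nth (x0:=x0) HP1 VP1 B1).
  by rewrite E0 -A1 (apply_nth _ HP1 hp0) swap_idx_T.
apply: (valid_nth (x0:=x0) HP1 VP1 B2).
by rewrite E1 -A1 (apply_nth _ HP1 hq1) swap_idx_T.
Qed.
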